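(* There exists a function $f:[0,\infty)\to\mathbb{R}$ with $f(x)\to 0$ as $x\to\infty$ such that for every finite simple graph $G$, \[ \Gamma(G) \leq \frac{\bigl(\mu_1(G)+f(\mu_1(G))\bigr)^2}{2} + 1, \] where $\mu_1(G)$ is the largest root of the matching polynomial of $G$ and $\Gamma(G)$ is the Grundy number of $G$.
   Context: For a graph $G$ on $n$ vertices, the matching polynomial is $\mu_G(x)=\sum_{M}(-1)^{|M|}x^{n-2|M|}$, the sum over all matchings $M\subseteq E(G)$ (including the empty matching); all its roots are real and $\mu_1(G)$ denotes the largest one. Given an ordering $(x_1,\dots,x_n)$ of $V(G)$, the first-fit coloring algorithm colors $x_i$ with the smallest positive integer not used on the neighbors of $x_i$ among $x_1,\dots,x_{i-1}$. The Grundy number $\Gamma(G)$ is the largest number of colors used by the first-fit algorithm over all vertex orderings. *)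

(* Defs.v *)
From HB Require Import structures.
From mathcomp Require Import all_boot all_order all_algebra.
From mathcomp Require Import all_classical all_reals all_analysis.
Set Implicit Arguments. Unset Strict Implicit. Unset Printing Implicit Defensive.
Import Order.TTheory GRing.Theory Num.Theory.

Definition simple_graph (T : finType) (e : rel T) : Prop :=
  symmetric e /\ irreflexive e.

Definition is_edge (T : finType) (e : rel T) (S : {set T}) : bool :=
  [exists x, exists y, e x y && (S == [set x; y])].

Definition is_matching (T : finType) (e : rel T) (M : {set {set T}}) : bool :=
  [forall S in M, is_edge e S] &&
  [forall S in M, forall S' in M, (S != S') ==> [disjoint S & S']].

Local Open Scope ring_scope.

Definition matching_poly (R : nzRingType) (T : finType) (e : rel T) : {poly R} :=
  \sum_(M : {set {set T}} | is_matching e M)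
     (-1) ^+ #|M| *: 'X^(#|T| - 2 * #|M|)%N.

(* largest root mu_1(G) (all roots are real; sup of the finite root set) *)
Definition mu1 (R : realType) (T : finType) (e : rel T) : R :=
  sup [set x : R | root (matching_poly R e) x].

Local Close Scope ring_scope.

Definition mex_pos (S : seq nat) : nat :=
  head 0 [seq k <- iota 1 (size S).+1 | k \notin S].

Fixpoint first_fit (T : finType) (e : rel T) (acc : seq (T * nat)) (s : seq T)
  : seq (T * nat) :=
  match s with
  | [::] => acc
  | x :: s' =>
      let c := mex_pos [seq p.2 | p <- acc & e p.1 x] in
      first_fit e (rcons acc (x, c)) s'
  end.

Definition ff_num_colors (T : finType) (e : rel T) (s : seq T) : nat :=
  size (undup [seq p.2 | p <- first_fit e [::] s]).

Definition grundy (T : finType) (e : rel T) : nat :=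
  \max_(s <- permutations (enum T)) ff_num_colors e s.

(* Main.v *)
Require Import Defs.
From HB Require Import structures.
From mathcomp Require Import all_boot all_order all_algebra.
From mathcomp Require Import all_classical all_reals all_analysis.
From mathcomp Require Import polyrcf zify.
From mathcomp.algebra_tactics Require Import ring lra.
Import Order.TTheory GRing.Theory Num.Theory.
Import numFieldNormedType.Exports.
Set Implicit Arguments. Unset Strict Implicit. Unset Printing Implicit Defensive.


Section Match.
Variable T : finType.
Variable e : rel T.
Hypothesis esymm : symmetric e.
Hypothesis eirr : irreflexive e.

Lemma is_edgeP (S : {set T}) : reflect (exists x y, e x y /\ S = [set x; y]) (is_edge e S).
Proof.
apply: (iffP existsP) => [[x /existsP [y /andP [exy /eqP ->]]]|[x [y [exy ->]]]].
  by exists x, y.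
by exists x; apply/existsP; exists y; rewrite exy eqxx.
Qed.

Lemma is_matchingP (M : {set {set T}}) : reflect ((forall S, S \in M -> is_edge e S) /\
   (forall S S' : {set T}, S \in M -> S' \in M -> S != S' -> [disjoint S & S']))
   (is_matching e M).
Proof.
apply: (iffP andP) => [[/forall_inP H1 /forall_inP H2]|[H1 H2]]; split => //.
- by move=> S S' SM S'M; move: (H2 S SM) => /forall_inP /(_ S' S'M) /implyP.
- by apply/forall_inP.
- apply/forall_inP => S SM; apply/forall_inP => S' S'M; apply/implyP; exact: H2.
Qed.

Lemma edge_card (S : {set T}) : is_edge e S -> #|S| = 2.
Proof.
case/is_edgeP => x [y [exy ->]]; rewrite cards2.
by case: eqP exy => // ->; rewrite eirr.
Qed.

Definition ok (A : {set T}) (M : {set {set T}}) :=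
  is_matching e M && [forall S in M, S \subset A].

Lemma ok_le (A : {set T}) (M : {set {set T}}) : ok A M -> (2 * #|M| <= #|A|)%N.
Proof.
case/andP => /is_matchingP [H1 H2] /forall_inP H3.
have tri : finset.trivIset M by apply/finset.trivIsetP => S S' SM S'M; exact: H2.
have : \sum_(B in M) #|B| = #|finset.cover M| by apply/eqP.
rewrite (eq_bigr (fun _ => 2)); last by move=> S SM; apply: edge_card; apply: H1.
rewrite sum_nat_const mulnC => ->; apply: subset_leq_card.
apply/fintype.subsetP => x /bigcupP [S SM xS].
by move/fintype.subsetP: (H3 S SM); apply.
Qed.

Variable R : realType.
Local Open Scope ring_scope.

Definition mv (A : {set T}) (y : R) : R :=
  \sum_(M | ok A M) (-1) ^+ #|M| * y ^+ (#|A| - 2 * #|M|)%N.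

Lemma ok0 (M : {set {set T}}) : ok finset.set0 M = (M == finset.set0).
Proof.
apply/idP/eqP => [/andP [/is_matchingP [H1 _] /forall_inP H3]|->].
  apply/setP => S; rewrite finset.in_set0; apply/negP => SM.
  move: (H3 S SM); rewrite finset.subset0 => /eqP SE.
  by move: (edge_card (H1 S SM)); rewrite SE finset.cards0.
apply/andP; split; last by apply/forall_inP => S; rewrite finset.in_set0.
by apply/is_matchingP; split => [S|S S']; rewrite finset.in_set0.
Qed.

Lemma mv0 y : mv finset.set0 y = 1.
Proof.
rewrite /mv (big_pred1 finset.set0); last by move=> M; rewrite ok0.
by rewrite !finset.cards0 muln0 subn0 !expr0 mul1r.
Qed.

Lemma disj2 (v u : T) (B : {set T}) : [disjoint [set v; u] & B] = (v \notin B) && (u \notin B).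
Proof. by rewrite finset.disjoints_subset finset.subUset !finset.sub1set !finset.in_setC. Qed.

Lemma matching_sub (M1 M2 : {set {set T}}) : M1 \subset M2 -> is_matching e M2 -> is_matching e M1.
Proof.
move=> /fintype.subsetP sub /is_matchingP [H1 H2]; apply/is_matchingP; split.
  by move=> S /sub; apply: H1.
by move=> S S' /sub SM /sub S'M; apply: H2.
Qed.


Lemma ok_D1 (A : {set T}) v (M : {set {set T}}) :
  ok (A :\ v) M = ok A M && [forall S in M, v \notin S].
Proof.
rewrite /ok -andbA; congr (_ && _).
apply/forall_inP/andP => [H|[/forall_inP H1 /forall_inP H2]].
  split; apply/forall_inP => S SM; have := H S SM; rewrite finset.subsetD1.
    by case/andP.
  by case/andP.
by move=> S SM; rewrite finset.subsetD1 H1 // H2.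
Qed.

Lemma partner (A : {set T}) v (M : {set {set T}}) : ok A M ->
  ~~ [forall S in M, v \notin S] ->
  exists u0, forall u, ((u \in A :\ v) && e v u && ([set v; u] \in M)) = (u == u0).
Proof.
case/andP => /is_matchingP [H1 H2] /forall_inP H3.
rewrite negb_forall_in => /exists_inP [S0 S0M]; rewrite negbK => vS0.
case/is_edgeP: (H1 _ S0M) => x [y [exy S0E]].
have [u0 [evu0 S0E']] : exists u0, e v u0 /\ S0 = [set v; u0].
  move: vS0; rewrite S0E !inE => /orP [/eqP->|/eqP->]; [exists y | exists x].
    by split.
  by split; [rewrite esymm | rewrite finset.setUC].
exists u0 => u; apply/idP/idP.
- case/andP => [/andP [uA evu] SM].
  have E : [set v; u] = S0.
    apply/eqP; apply/negPn/negP => neq.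
    by move: (H2 _ _ SM S0M neq); rewrite disj2 vS0.
  have : u \in S0 by rewrite -E !inE eqxx orbT.
  rewrite S0E' !inE => /orP [/eqP uv|//].
  by move: evu; rewrite uv eirr.
- move/eqP ->; rewrite -S0E' S0M andbT evu0 andbT !inE.
  apply/andP; split.
    by apply/eqP => E; move: evu0; rewrite E eirr.
  by move/fintype.subsetP: (H3 S0 S0M); apply; rewrite S0E' !inE eqxx orbT.
Qed.

Lemma pred_edge (A : {set T}) v u (M' : {set {set T}}) : v \in A -> u \in A :\ v -> e v u ->
  (ok A ([set v; u] |: M') && ([set v; u] \in [set v; u] |: M'))
     && (([set v; u] |: M') :\ [set v; u] == M') = ok (A :\ v :\ u) M'.
Proof.
move=> vA uA evu; set S := [set v; u].
apply/idP/idP.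
+ case/andP => [/andP [okM _] /eqP ME].
  have SM' : S \notin M' by rewrite -ME finset.setD11.
  case/andP: okM => mat /forall_inP H3.
  have [H1 H2] := is_matchingP _ mat.
  apply/andP; split.
    exact: (matching_sub (finset.subsetUr [set S] M') mat).
  apply/forall_inP => S1 S1M.
  have S1M2 : S1 \in S |: M' by rewrite finset.setU1r.
  have neq : S != S1 by apply: contraNneq SM' => ->.
  have := H2 _ _ (finset.setU11 _ _) S1M2 neq; rewrite disj2 => /andP [vS1 uS1].
  by rewrite !finset.subsetD1 H3 // vS1 uS1.
+ move=> okM'; have [/is_matchingP [H1 H2] /forall_inP H3] := andP okM'.
  have vnot : forall S1, S1 \in M' -> (v \notin S1) && (u \notin S1).
    by move=> S1 /H3; rewrite !finset.subsetD1 => /andP[/andP[_ ->] ->].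
  have SM' : S \notin M'.
    by apply/negP => /vnot; rewrite !inE eqxx.
  rewrite finset.setU11 andbT finset.setU1K // eqxx andbT.
  apply/andP; split.
  * apply/is_matchingP; split.
    - move=> S1; rewrite finset.in_setU1 => /orP [/eqP->|/H1 //].
      by apply/is_edgeP; exists v, u.
    - move=> S1 S2; rewrite !finset.in_setU1.
      move=> /orP [/eqP->|S1M] /orP [/eqP->|S2M]; try by rewrite eqxx.
      + by move=> _; rewrite disj2; exact: vnot.
      + by move=> _; rewrite disjoint_sym disj2; exact: vnot.
      + exact: H2.
  * apply/forall_inP => S1; rewrite finset.in_setU1 => /orP [/eqP->|/H3].
    - rewrite finset.subUset !finset.sub1set vA /=.
      by move: uA; rewrite !inE => /andP [].
    - move=> sub; apply: (fintype.subset_trans sub).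
      exact: fintype.subset_trans (finset.subsetDl _ _) (finset.subsetDl _ _).
Qed.

Lemma mv_edge (A : {set T}) v u y : v \in A -> u \in A :\ v -> e v u ->
  \sum_(M | ok A M && ([set v; u] \in M)) (-1) ^+ #|M| * y ^+ (#|A| - 2 * #|M|)%N
   = - mv (A :\ v :\ u) y.
Proof.
move=> vA uA evu; set S := [set v; u].
rewrite (reindex_onto (fun M' => S |: M') (fun M => M :\ S)) /=; last first.
  by move=> M /andP [_ SM]; rewrite finset.setD1K.
rewrite /mv -sumrN; apply: eq_big => M'; first exact: pred_edge.
move=> H; have okM' : ok (A :\ v :\ u) M' by rewrite -pred_edge.
case/andP: H => _ /eqP ME.
have SM' : S \notin M' by rewrite -ME finset.setD11.
have le := ok_le okM'.
rewrite finset.cardsU1 SM' add1n exprS mulN1r mulNr; congr (- (_ * y ^+ _)).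
rewrite (cardsD1 v A) vA (cardsD1 u (A :\ v)) uA.
rewrite mulnS !add1n subSS; by [].
Qed.

Lemma mv_rec (A : {set T}) v y : v \in A ->
  mv A y = y * mv (A :\ v) y - \sum_(u in A :\ v | e v u) mv (A :\ v :\ u) y.
Proof.
move=> vA.
rewrite {1}/mv (bigID (fun M : {set {set T}} => [forall S in M, v \notin S])) /=.
congr (_ + _).
- rewrite /mv mulr_sumr; apply: eq_big => M; first by rewrite ok_D1.
  move=> /andP [okM nv]; have okM' : ok (A :\ v) M by rewrite ok_D1 okM.
  have le := ok_le okM'.
  by rewrite (cardsD1 v A) vA add1n subSn // exprS mulrCA.
- rewrite -sumrN.
  transitivity (\sum_(M | ok A M && ~~ [forall S in M, v \notin S])
     \sum_(u | (u \in A :\ v) && e v u && ([set v; u] \in M))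
        ((-1) ^+ #|M| * y ^+ (#|A| - 2 * #|M|)%N)).
    apply: eq_bigr => M /andP [okM cov].
    by have [u0 Hu0] := partner okM cov; rewrite (big_pred1 u0 Hu0).
  rewrite (exchange_big_dep (fun u => (u \in A :\ v) && e v u)) /=; last first.
    by move=> M u _ /andP [/andP [-> ->]].
  apply: eq_bigr => u /andP [uA evu]; rewrite -(mv_edge y vA uA evu).
  apply: eq_bigl => M; rewrite uA evu /=.
  case SM: ([set v; u] \in M); rewrite ?andbF ?andbT //.
  case okM: (ok A M) => //=.
  by apply/negP => /forall_inP /(_ _ SM); rewrite !inE eqxx.
Qed.

Lemma D1U (H K : {set T}) w : w \notin H -> (H :|: K) :\ w = H :|: (K :\ w).
Proof.
move=> wH; apply/setP => x; rewrite !inE; case: eqP => // ->.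
by rewrite (negPf wH).
Qed.

Lemma mv_mul (H K : {set T}) y : [disjoint H & K] ->
  (forall h k, h \in H -> k \in K -> ~~ e k h) ->
  mv (H :|: K) y = mv H y * mv K y.
Proof.
move: {2}#|K| (leqnn #|K|) => n; elim: n K => [|n IH] K.
  rewrite leqn0 finset.cards_eq0 => /eqP -> _ _.
  by rewrite finset.setU0 mv0 mulr1.
move=> Kn dHK nE.
have [K0|[w wK]] := finset.set_0Vmem K.
  by rewrite K0 finset.setU0 mv0 mulr1.
have wH : w \notin H by rewrite (disjointFl dHK wK).
rewrite (mv_rec y (fintype.subsetP (finset.subsetUr H K) w wK)) (mv_rec y wK) D1U //.
have Kw : (#|K :\ w| <= n)%N by move: Kn; rewrite (cardsD1 w K) wK.
have dHKw : forall K' : {set T}, K' \subset K -> [disjoint H & K'].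
  move=> K' sub; exact: (fintype.disjointWr sub dHK).
have nEw : forall K' : {set T}, K' \subset K -> (forall h k, h \in H -> k \in K' -> ~~ e k h).
  by move=> K' /fintype.subsetP sub h k hH kK'; apply: nE => //; apply: sub.
have s1 : K :\ w \subset K by apply: finset.subsetDl.
rewrite IH //; try (by apply: dHKw); try (by apply: nEw).
rewrite mulrBr mulrCA; congr (_ - _).
rewrite mulr_sumr.
rewrite (eq_bigl (fun u => (u \in K :\ w) && e w u)); last first.
  move=> u; rewrite finset.in_setU.
  case uH: (u \in H) => //=.
  have := nE _ _ uH wK; case: (e w u) => //; rewrite andbF.
  by case: (u \in K :\ w).
apply: eq_bigr => u /andP [uK ewu].
have uH : u \notin H by rewrite (disjointFl dHK) //; move: uK; rewrite !inE => /andP [].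
rewrite D1U // IH //.
- by move: Kw; rewrite (cardsD1 u (K :\ w)) uK add1n => /ltnW.
- apply: dHKw; exact: fintype.subset_trans (finset.subsetDl _ _) s1.
- apply: nEw; exact: fintype.subset_trans (finset.subsetDl _ _) s1.
Qed.

Definition pm (A : {set T}) : {poly R} :=
  \sum_(M | ok A M) (-1) ^+ #|M| *: 'X^(#|A| - 2 * #|M|)%N.

Lemma pm_horner A y : (pm A).[y] = mv A y.
Proof.
rewrite /pm /mv horner_sum; apply: eq_bigr => M _.
by rewrite hornerZ hornerXn.
Qed.

Lemma matching_poly_pm : matching_poly R e = pm [set: T].
Proof.
rewrite /matching_poly /pm; apply: eq_big => M.
  by rewrite /ok; case: (is_matching e M) => //=; apply/esym/forall_inP => S _; apply: finset.subsetT.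
by rewrite finset.cardsT.
Qed.

Lemma ok_set0 A : ok A finset.set0.
Proof.
apply/andP; split; last by apply/forall_inP => S; rewrite finset.in_set0.
by apply/is_matchingP; split => [S|S S']; rewrite finset.in_set0.
Qed.

Lemma pm_lead A : lead_coef (pm A) = 1.
Proof.
rewrite /pm (bigD1 finset.set0) ?ok_set0 //= finset.cards0 muln0 subn0 expr0 scale1r.
rewrite lead_coefDl ?lead_coefXn // size_polyXn ltnS.
apply: (leq_trans (size_sum _ _ _)); apply/bigmax_leqP => M /andP [okM M0].
apply: (leq_trans (size_scale_leq _ _)); rewrite size_polyXn.
have := ok_le okM; have : (0 < #|M|)%N by rewrite card_gt0.
move: (#|M|) (#|A|) => a b; clear; move=> h1 h2.
lia.
Qed.

Lemma pm_neq0 A : pm A != 0.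
Proof. by rewrite -lead_coef_eq0 pm_lead oner_neq0. Qed.

Lemma pos_or_root (A : {set T}) x : mv A x <= 0 -> exists r, x <= r /\ root (pm A) r.
Proof.
move=> h; case: (pselect (exists r, x <= r /\ root (pm A) r)) => // nr.
have H : {in `[x, +oo[, forall y, ~~ root (pm A) y}.
  move=> y; rewrite in_itv andbT /= => xy; apply/negP => ry; apply: nr; by exists y.
have := sgp_pinftyP H; move/(_ x); rewrite in_itv /= lexx => /(_ isT).
rewrite /sgp_pinfty pm_lead sgr1 => /eqP; rewrite sgr_cp0 pm_horner.
by rewrite ltNge h.
Qed.

Definition Pall : {poly R} := \prod_(p <- [seq pm A | A <- enum {set T}]) p.

Lemma Pall_neq0 : Pall != 0.
Proof. by rewrite /Pall prodf_seq_neq0; apply/allP => _ /mapP [A _ ->]; rewrite /= pm_neq0. Qed.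

Lemma root_Pall z : root Pall z = [exists A, root (pm A) z].
Proof.
apply/idP/idP.
  apply: contraLR; rewrite negb_exists => /forallP H.
  by rewrite /Pall root_bigmul all_map; apply/allP => A _ /=; apply: H.
case/existsP => A rA; apply: contraLR rA.
rewrite /Pall root_bigmul all_map => /allP /(_ A); rewrite mem_enum; exact.
Qed.

Lemma good x : (forall y, x <= y -> ~~ root (pm [set: T]) y) ->
  forall A, 0 < mv A x.
Proof.
move=> hV A0; rewrite ltNge; apply/negP => hA0.
have [r [xr rr]] := pos_or_root hA0.
have rP : root Pall r by rewrite root_Pall; apply/existsP; exists A0.
have noroot_cb : forall z, cauchy_bound Pall <= z -> ~~ root Pall z.
  by move=> z hz; apply: ge_cauchy_bound; rewrite ?Pall_neq0 // in_itv /= hz.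
have rcb : r < cauchy_bound Pall.
  by rewrite ltNge; apply/negP => /noroot_cb; rewrite rP.
have [ys [ysr ysx ysgt]] : exists ys, [/\ root Pall ys, x <= ys &
     forall z, ys < z -> ~~ root Pall z].
  case: (prev_rootP Pall (x - 1) (cauchy_bound Pall)) => [P0|y np0 py0 hy hnr|c np0 hc hnr].
  - by move: Pall_neq0; rewrite P0 eqxx.
  - have ry : r <= y.
      rewrite leNgt; apply/negP => yr; move: (hnr r); rewrite in_itv /= yr rcb /=.
      by move=> /(_ isT); rewrite rP.
    exists y; split; first by apply/eqP.
      exact: le_trans xr ry.
    move=> z yz; case: (ltP z (cauchy_bound Pall)) => zc; last exact: noroot_cb.
    by apply: hnr; rewrite in_itv /= yz zc.
  - exfalso; move: (hnr r); rewrite in_itv /= rcb andbT.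
    move=> H; move: rP; apply/negP; apply: H; apply: (lt_le_trans _ xr).
    by rewrite ltrBlDr ltrDl ltr01.
have posB : forall B z, ys < z -> 0 < mv B z.
  move=> B z ysz.
  have H : {in `[z, +oo[, forall y, ~~ root (pm B) y}.
    move=> y; rewrite in_itv andbT /= => zy.
    have := ysgt y (lt_le_trans ysz zy); rewrite root_Pall negb_exists => /forallP; exact.
  have := sgp_pinftyP H; move/(_ z); rewrite in_itv /= lexx => /(_ isT).
  by rewrite /sgp_pinfty pm_lead sgr1 => /eqP; rewrite sgr_cp0 pm_horner.
have nnB : forall B, 0 <= mv B ys.
  move=> B; rewrite leNgt; apply/negP => neg.
  have h1 : ys <= ys + 1 by rewrite lerDl ler01.
  have h2 : (pm B).[ys] * (pm B).[ys + 1] <= 0.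
    rewrite !pm_horner; apply: ltW; rewrite pmulr_llt0 //; apply: posB.
    by rewrite ltrDl ltr01.
  have [z zin rz] := polyrcf.poly_ivt h1 h2.
  move: zin; rewrite in_itv /= => /andP [ysz _].
  move: ysz; rewrite le_eqVlt => /orP [/eqP E|ysz].
    by move: rz; rewrite -E rootE pm_horner lt_eqF.
  by move: (ysgt z ysz); rewrite root_Pall negb_exists => /forallP /(_ B); rewrite rz.
have [H0 rH0] : exists H0, root (pm H0) ys by move: ysr; rewrite root_Pall => /existsP.
case: (@arg_minnP _ H0 (fun H => root (pm H) ys) (fun H : {set T} => #|H|) rH0) => H rH Hmin.
have posS : forall B : {set T}, (#|B| < #|H|)%N -> 0 < mv B ys.
  move=> B BH; rewrite lt_def nnB andbT; apply/negP => /eqP B0.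
  have : root (pm B) ys by rewrite rootE pm_horner B0.
  by move/Hmin; rewrite leqNgt BH.
have mH : mv H ys = 0 by apply/eqP; rewrite -pm_horner -rootE.
case: (pselect (exists w u, [/\ w \notin H, u \in H & e w u])) => [[w [u [wH uH ewu]]]|noe].
- have := nnB (w |: H); rewrite (mv_rec ys (finset.setU11 w H)).
  have -> : (w |: H) :\ w = H.
    by rewrite finset.setU1K.
  rewrite mH mulr0 sub0r oppr_ge0 leNgt => /negP; apply.
  rewrite (bigD1 u) /=; last by rewrite uH ewu.
  have p1 : 0 < mv (H :\ u) ys.
    by apply: posS; rewrite (cardsD1 u H) uH add1n.
  apply: (lt_le_trans p1); rewrite lerDl; apply: sumr_ge0 => B /andP [/andP [BH _] _].
  by apply: ltW; apply: posS; rewrite (cardsD1 B H) BH.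
- have : mv [set: T] ys = 0.
    rewrite -(finset.setUCr H) mv_mul ?mH ?mul0r //.
      by rewrite finset.disjoints_subset finset.setCK.
    move=> h k hH; rewrite finset.in_setC => kH; apply/negP => ekh; apply: noe.
    by exists k, h.
  move=> V0; move: (hV ys ysx); rewrite rootE pm_horner V0 eqxx //.
Qed.

Lemma sum_sub_le (I : finType) (P Q : pred I) (F : I -> R) :
  (forall i, P i -> Q i) -> (forall i, Q i -> 0 <= F i) ->
  \sum_(i | P i) F i <= \sum_(i | Q i) F i.
Proof.
move=> PQ F0; rewrite [X in _ <= X](bigID P) /=.
rewrite (eq_bigl (fun i => Q i && P i)); last first.
  by move=> i; case Pi: (P i); rewrite ?andbT ?andbF ?PQ.
by rewrite lerDl sumr_ge0 // => i /andP [/F0].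
Qed.

Fixpoint bs (x : R) (n : nat) : R := if n is n'.+1 then bs x n' - (bs x n')^-1 else x.

Lemma bs_sum x n : bs x n = x - \sum_(j < n) (bs x j)^-1.
Proof.
elim: n => [|n IH]; first by rewrite big_ord0 subr0.
by rewrite big_ord_recr /= IH opprD addrA.
Qed.

Variable col : T -> nat.
Hypothesis colP : forall v j, (0 < j < col v)%N -> exists u, e u v /\ col u = j.

Lemma chain x : (forall A, 0 < mv A x) -> forall c v (A : {set T}), col v = c.+1 -> v \in A ->
  (forall w, (col w <= c)%N -> w \in A) -> mv A x / mv (A :\ v) x <= bs x c.
Proof.
move=> G; elim/ltn_ind => c IH v A cv vA hA.
set D := mv (A :\ v) x; have Dp : 0 < D := G _.
rewrite (mv_rec x vA) -/D mulrBl mulfK ?gt_eqF // bs_sum lerD2l lerN2.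
rewrite mulr_suml.
pose g (j : 'I_c) := odflt v [pick u | e u v && (col u == j.+1)].
have Hg : forall j : 'I_c, e (g j) v /\ col (g j) = j.+1.
  move=> j; rewrite /g; case: pickP => [u /andP [euv /eqP cu]|H] //=.
  have [u [euv cu]] : exists u, e u v /\ col u = j.+1 by apply: colP; rewrite cv /=; exact: ltn_ord.
  by move: (H u); rewrite euv cu eqxx.
have ginj : injective g.
  by move=> i j E; apply/val_inj/eq_add_S; rewrite -(proj2 (Hg i)) -(proj2 (Hg j)) E.
have gneq : forall j : 'I_c, g j != v.
  by move=> j; apply/eqP => E; move: (proj2 (Hg j)); rewrite E cv => -[] /eqP; rewrite eqn_leq leqNgt ltn_ord.
have gA : forall j : 'I_c, g j \in A :\ v.
  by move=> j; rewrite !inE gneq hA // (proj2 (Hg j)) ltn_ord.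
apply: (@le_trans _ _ (\sum_(j < c) mv (A :\ v :\ g j) x / D)).
  apply: ler_sum => j _.
  have hIH := IH j (ltn_ord j) (g j) (A :\ v) (proj2 (Hg j)) (gA j).
  have E0 : 0 < mv (A :\ v :\ g j) x := G _.
  have hIH' : mv (A :\ v) x / mv (A :\ v :\ g j) x <= bs x j.
    apply: hIH => w cw; rewrite !inE hA ?(leq_trans cw) ?(ltnW (ltn_ord j)) // andbT.
    by apply/eqP => E; move: cw; rewrite E cv ltnNge ltnW.
  have q0 : 0 < mv (A :\ v) x / mv (A :\ v :\ g j) x by rewrite divr_gt0.
  have b0 : 0 < bs x j := lt_le_trans q0 hIH'.
  rewrite -[mv (A :\ v :\ g j) x / D]invf_div ler_pV2 //.
    by rewrite inE unitfE gt_eqF.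
  by rewrite inE unitfE gt_eqF.
rewrite -(big_imset (fun u => mv (A :\ v :\ u) x / D)) /=; last by move=> i j _ _; apply: ginj.
apply: sum_sub_le.
  move=> u /imsetP [j _ ->]; rewrite gA /=; have [h _] := Hg j; by rewrite esymm.
by move=> u _; rewrite divr_ge0 // ltW // G.
Qed.

End Match.

Arguments bs {R}.


Lemma head_filter_iota (S : seq nat) m n :
  has (fun k => k \notin S) (iota m n) ->
  (m <= head 0 [seq k <- iota m n | k \notin S])%N /\
  forall j, (m <= j < head 0 [seq k <- iota m n | k \notin S])%N -> j \in S.
Proof.
elim: n m => [//|n IH] m /=.
case: ifP => [mS _|/negbFE mS hS] /=.
  by split => // j /andP [h1 h2]; move: (leq_trans h2 h1); rewrite ltnn.
have [h1 h2] := IH m.+1 hS; split; first exact: ltnW.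
move=> j /andP [mj jc]; rewrite leq_eqVlt in mj; case/orP: mj => [/eqP <- //|mj'].
by apply: h2; rewrite mj' jc.
Qed.

Lemma mex_posP (S : seq nat) :
  (0 < mex_pos S)%N /\ forall j, (0 < j < mex_pos S)%N -> j \in S.
Proof.
have hS : has (fun k => k \notin S) (iota 1 (size S).+1).
  apply/negPn/negP => /hasPn H.
  have := uniq_leq_size (iota_uniq 1 (size S).+1) (fun k kI => negbNE (H k kI)).
  by rewrite size_iota ltnn.
exact: head_filter_iota hS.
Qed.

Section FF.
Variable T : finType.
Variable e : rel T.

Lemma unzip1_ff (acc : seq (T * nat)) s : unzip1 (first_fit e acc s) = unzip1 acc ++ s.
Proof.
elim: s acc => [|x s IH] acc /=; first by rewrite cats0.
by rewrite IH /unzip1 map_rcons cat_rcons.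
Qed.

Definition Inv (L : seq (T * nat)) := forall p, p \in L -> (0 < p.2)%N /\
  forall j, (0 < j < p.2)%N -> exists2 q, q \in L & e q.1 p.1 /\ q.2 = j.

Lemma Inv_ff acc s : Inv acc -> Inv (first_fit e acc s).
Proof.
elim: s acc => [//|x s IH] acc /= Hacc; apply: IH.
move=> p; rewrite mem_rcons inE => /orP [/eqP ->|pacc] /=.
  have [h1 h2] := mex_posP [seq p.2 | p <- acc & e p.1 x]; split => // j /h2.
  case/mapP => q; rewrite mem_filter => /andP [eq qacc] ->.
  by exists q; rewrite ?mem_rcons ?inE ?qacc ?orbT.
have [h1 h2] := Hacc p pacc; split => // j /h2 [q qacc hq].
by exists q; rewrite ?mem_rcons ?inE ?qacc ?orbT.
Qed.

Definition colL (L : seq (T * nat)) (v : T) : nat :=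
  (nth (v, 0%N) L (index v (unzip1 L))).2.

Lemma colL_mem (L : seq (T * nat)) p : uniq (unzip1 L) -> p \in L -> colL L p.1 = p.2.
Proof.
move=> uL pL; rewrite /colL.
set i := index p L.
have iL : (i < size L)%N by rewrite index_mem.
have E : nth p.1 (unzip1 L) i = p.1 by rewrite (nth_map p) // nth_index.
have : index p.1 (unzip1 L) = i.
  by rewrite -{1}E index_uniq // size_map.
by move ->; rewrite (set_nth_default p) // nth_index.
Qed.

Lemma ff_props (s : seq T) : perm_eq s (enum T) ->
  exists col : T -> nat,
    [/\ forall v, (0 < col v)%N,
        forall v j, (0 < j < col v)%N -> exists u, e u v /\ col u = j &
        (ff_num_colors e s <= \max_(v : T) col v)%N].
Proof.
move=> ps; set L := first_fit e [::] s.
have uL : uniq (unzip1 L) by rewrite unzip1_ff /= (perm_uniq ps) enum_uniq.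
have IL : Inv L by apply: Inv_ff => p.
have memL : forall v, exists2 p, p \in L & p.1 = v.
  move=> v; have : v \in unzip1 L by rewrite unzip1_ff /= (perm_mem ps) mem_enum.
  by case/mapP => p pL ->; exists p.
exists (colL L); split.
- move=> v; have [p pL <-] := memL v; rewrite colL_mem //.
  by have [] := IL p pL.
- move=> v j; have [p pL <-] := memL v; rewrite colL_mem // => /(proj2 (IL p pL)).
  case=> q qL [eq qj]; exists q.1; split => //; by rewrite colL_mem.
- rewrite /ff_num_colors -/L.
  have : {subset undup [seq p.2 | p <- L] <= iota 1 (\max_(v : T) colL L v)}.
    move=> c; rewrite mem_undup => /mapP [p pL ->]; rewrite mem_iota add1n ltnS.
    have [h1 _] := IL p pL; rewrite h1 /=.
    rewrite -(colL_mem uL pL); exact: leq_bigmax.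
  move/(uniq_leq_size (undup_uniq _)); by rewrite size_iota.
Qed.

End FF.

Section AnaS.
Local Open Scope ring_scope.


Section Ana.
Variable R : realType.


Lemma bs_sq (x : R) n : bs x n != 0 -> bs x n.+1 ^+ 2 = bs x n ^+ 2 - 2 + (bs x n ^+ 2)^-1.
Proof. move=> h /=; set b := bs x n; field. exact: h. Qed.

Lemma bs_bound (x : R) k : (forall j, (j < k.+1)%N -> 0 < bs x j) ->
  (k%:R < x ^+ 2) /\ (2 * k%:R < x ^+ 2 + \sum_(i < k) ((i.+1)%:R)^-1).
Proof.
move=> hp.
have B1 : forall i, (i < k)%N -> 1 < bs x i ^+ 2.
  move=> i ik; have b0 := hp i (ltnW ik); have b1 := hp i.+1 ik.
  move: b1 => /=; rewrite subr_gt0 => h.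
  have : 1 < bs x i * bs x i.
    have b0' : bs x i != 0 by rewrite gt_eqF.
    by rewrite -(mulVf b0') ltr_pM2r.
  by rewrite expr2.
have Brec : forall i, (i <= k)%N -> bs x i ^+ 2 = x ^+ 2 - 2 * i%:R + \sum_(j < i) (bs x j ^+ 2)^-1.
  elim => [|i IH] ik; first by rewrite big_ord0 mulr0 subr0 addr0.
  rewrite bs_sq ?gt_eqF ?hp // ?(leq_trans ik) //.
  rewrite {1}(IH (ltnW ik)) big_ord_recr /= -[i.+1]addn1 natrD; ring.
have Bd : forall d, (d <= k)%N -> d%:R < bs x (k - d) ^+ 2.
  elim => [|d IH] dk; first by rewrite subn0 exprn_gt0 ?hp.
  have i1 : ((k - d.+1).+1 = k - d)%N by lia.
  have hi : (k - d.+1 < k)%N by lia.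
  have := B1 _ hi; have := IH (ltnW dk).
  rewrite -i1 bs_sq ?gt_eqF ?hp //; last by lia.
  set B := bs x (k - d.+1) ^+ 2 => h1 h2.
  have : B^-1 < 1 by rewrite invf_lt1 // (lt_trans ltr01 h2).
  rewrite -natr1; lra.
split.
  by have := Bd k (leqnn k); rewrite subnn /=.
have := Brec k (leqnn k); have := hp k (leqnn _).
move=> bk0 E.
have h : 2 * k%:R < x ^+ 2 + \sum_(j < k) (bs x j ^+ 2)^-1.
  have : 0 < bs x k ^+ 2 by rewrite exprn_gt0.
  rewrite E; lra.
apply: (lt_le_trans h); rewrite lerD2l.
rewrite [X in _ <= X](reindex_inj rev_ord_inj) /=.
apply: ler_sum => i _.
have ik : (i < k)%N := ltn_ord i.
have := Bd (k - i)%N (leq_subr _ _); rewrite subKn ?(ltnW ik) // => h2.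
have ki0 : (0 : R) < (k - i)%:R by rewrite ltr0n subn_gt0.
by rewrite subnSK // lef_pV2 ?ltW // posrE //; apply: lt_trans h2.
Qed.

Lemma sqrt4 (a : R) : 0 <= a -> (Num.sqrt (Num.sqrt a)) ^+ 4 = a.
Proof.
move=> a0; rewrite (_ : 4%N = (2 * 2)%N) // exprM sqr_sqrtr ?sqrtr_ge0 //.
by rewrite sqr_sqrtr.
Qed.

Lemma harm_bound m : \sum_(i < m) ((i.+1)%:R : R)^-1 <= 4 * Num.sqrt (Num.sqrt (m%:R : R)).
Proof.
elim: m => [|m IH]; first by rewrite big_ord0 !sqrtr0 mulr0.
rewrite big_ord_recr /=.
set p := Num.sqrt (Num.sqrt (m%:R : R)).
set q := Num.sqrt (Num.sqrt (m.+1%:R : R)).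
have hp : 0 <= p by apply: sqrtr_ge0.
have hq : 0 <= q by apply: sqrtr_ge0.
have p4 : p ^+ 4 = m%:R by apply: sqrt4.
have q4 : q ^+ 4 = m%:R + 1 by rewrite sqrt4 // -natr1.
have q1 : 1 <= q.
  rewrite leNgt; apply/negP => q1.
  have : q ^+ 4 < 1 by rewrite exprn_ilt1 // (lt_trans ltr01) //; lra.
  rewrite q4; have : (0 : R) <= m%:R by []. lra.
have pq : p <= q.
  rewrite leNgt; apply/negP => qp.
  have : q ^+ 4 < p ^+ 4 by rewrite ltr_pXn2r //.
  rewrite p4 q4; lra.
have e1 : 1 = (q - p) * ((q + p) * (q ^+ 2 + p ^+ 2)).
  have : q ^+ 4 - p ^+ 4 = 1 by rewrite p4 q4; ring.
  move=> <-; ring.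
have e2 : (q + p) * (q ^+ 2 + p ^+ 2) <= 4 * q ^+ 4.
  have : q + p <= 2 * q by lra.
  have : q ^+ 2 + p ^+ 2 <= 2 * q ^+ 2.
    have : p ^+ 2 <= q ^+ 2 by rewrite ler_pXn2r // ?nnegrE.
    lra.
  have : q ^+ 3 <= q ^+ 4 by rewrite [q ^+ 4]exprS ler_peMl // exprn_ge0.
  rewrite !exprS !expr0 !mulr1 => h3 h2 h1.
  nra.
have key : (m.+1%:R : R)^-1 <= 4 * (q - p).
  rewrite -div1r ler_pdivrMr ?ltr0n //.
  rewrite -[m.+1]addn1 natrD -q4.
  have h : 1 <= (q - p) * (4 * q ^+ 4).
    by rewrite {1}e1 ler_wpM2l // subr_ge0.
  by apply: (le_trans h); rewrite mulrA [(q - p) * 4]mulrC.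
apply: (le_trans (lerD IH key)); rewrite -/p; lra.
Qed.

End Ana.

End AnaS.

Local Open Scope classical_set_scope.
Local Open Scope ring_scope.


Lemma f_cvg (R : realType) : (fun z : R => 2 / Num.sqrt z) x @[x --> +oo] --> 0.
Proof.
apply/cvgrPdist_lt => eps eps0.
exists (4 / eps ^+ 2); split; first by rewrite num_real.
move=> z hz.
have e2 : 0 < eps ^+ 2 by rewrite exprn_gt0.
have z0 : 0 < z by apply: lt_trans hz; rewrite divr_gt0.
have sz : 2 / eps < Num.sqrt z.
  rewrite -(ltr_pXn2r (n := 2)) // ?nnegrE ?sqrtr_ge0 ?divr_ge0 ?ltW //.
  rewrite sqr_sqrtr ?ltW // expr_div_n.
  by have -> : (2 : R) ^+ 2 = 4 by rewrite expr2; ring.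
have s0 : 0 < Num.sqrt z by rewrite sqrtr_gt0.
rewrite sub0r normrN ger0_norm ?divr_ge0 ?ltW //.
rewrite ltr_pdivrMr //.
by move: sz; rewrite ltr_pdivrMr // mulrC.
Qed.


Lemma max_attained (A : eqType) (F : A -> nat) (r : seq A) :
  (\max_(s <- r) F s = 0 \/ exists2 s, s \in r & \max_(s <- r) F s = F s)%N.
Proof.
elim: r => [|x r IH]; first by left; rewrite big_nil.
rewrite big_cons; case: (leqP (F x) (\max_(s <- r) F s)) => h.
  case: IH => [->|[s sr ->]]; first by left.
  by right; exists s; rewrite // inE sr orbT.
by right; exists x; rewrite ?inE ?eqxx.
Qed.

Lemma lim_sq (R : realType) (a c : R) : 0 <= a -> (forall x, a < x -> c < x ^+ 2) -> c <= a ^+ 2.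
Proof.
move=> a0 H; rewrite leNgt; apply/negP => ca.
set d := c - a ^+ 2.
have d0 : 0 < d by rewrite subr_gt0.
set t := 2 * a + 1 + d.
have t0 : 0 < t by rewrite /t; lra.
set dl := d / t.
have dl0 : 0 < dl by rewrite divr_gt0.
have dl1 : dl * t = d by rewrite /dl mulfVK ?gt_eqF.
have dlle : dl <= 1.
  rewrite /dl ler_pdivrMr // mul1r /t; lra.
have := H (a + dl); rewrite ltrDl => /(_ dl0).
have : dl ^+ 2 <= dl by rewrite expr2 ler_piMl // ltW.
move: dl1; rewrite /t => dl1.
have : dl * (2 * a + 1) <= d.
  have -> : dl * (2 * a + 1) = d - dl * d.
    by rewrite -{1}dl1; ring.
  have : 0 <= dl * d by rewrite mulr_ge0 ?ltW.
  lra.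
have -> : (a + dl) ^+ 2 = a ^+ 2 + dl * (2 * a + 1) + (dl ^+ 2 - dl) by ring.
rewrite /d; lra.
Qed.

Section Final.
Variable R : realType.
Variable T : finType.
Variable e : rel T.
Hypothesis esymm : symmetric e.
Hypothesis eirr : irreflexive e.

Lemma mu1_ge (y : R) : root (matching_poly R e) y -> y <= mu1 R e.
Proof.
move=> ry; rewrite /mu1.
have nz : matching_poly R e != 0 by rewrite matching_poly_pm pm_neq0.
apply: (sup_upper_bound _ ry); split; first by exists y.
exists (cauchy_bound (matching_poly R e)) => z /= rz.
apply: ltW; apply: le_lt_trans (cauchy_boundP nz (rootP rz)).
exact: ler_norm.
Qed.

Lemma good_mu (x : R) : mu1 R e < x -> forall A, 0 < mv e A x.
Proof.
move=> mx; apply: (good esymm eirr) => y xy; apply/negP => ry.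
have := mu1_ge (y := y); rewrite matching_poly_pm => /(_ ry) ym.
by move: (lt_le_trans mx (le_trans xy ym)); rewrite ltxx.
Qed.

Lemma stepA (x : R) : mu1 R e < x -> (0 < grundy e)%N ->
  [/\ 0 < x, ((grundy e).-1)%:R < x ^+ 2 &
     2 * ((grundy e).-1)%:R < x ^+ 2 + 4 * Num.sqrt (Num.sqrt (((grundy e).-1)%:R : R))].
Proof.
move=> mx g0.
have G := good_mu mx.
have [s0 s0P gE] : exists2 s0, s0 \in permutations (enum T) & grundy e = ff_num_colors e s0.
  rewrite /grundy; case: (max_attained (ff_num_colors e) (permutations (enum T))) => [E|[s sP E]].
    by move: g0; rewrite /grundy E.
  by exists s.
have ps : perm_eq s0 (enum T) by rewrite -mem_permutations.
have [col [colpos colP kb]] := ff_props e ps.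
set k := grundy e.
have [v0 kv0] : exists v0, (k <= col v0)%N.
  case: (pselect (exists v0, (k <= col v0)%N)) => // nv.
  have : (\max_(v : T) col v <= k.-1)%N.
    apply/bigmax_leqP => v _; rewrite -ltnS prednK //; rewrite ltnNge; apply/negP => kv.
    by apply: nv; exists v.
  by rewrite -gE in kb; move=> /(leq_trans kb); rewrite -ltnS prednK // ltnn.
have bw : forall w, 0 < bs x (col w).-1.
  move=> w; have cw : col w = (col w).-1.+1 by rewrite prednK.
  have := chain esymm eirr colP G (A := [set: T]) cw (finset.in_setT w) (fun w _ => finset.in_setT w).
  apply: lt_le_trans; rewrite divr_gt0 //.
have bpos : forall j, (j < (k.-1).+1)%N -> 0 < bs x j.
  move=> j; rewrite prednK // => jk.
  have : (j.+1 <= col v0)%N by apply: leq_trans kv0.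
  rewrite leq_eqVlt => /orP [/eqP E|jc].
    by have := bw v0; rewrite -E.
  have [u [_ cu]] : exists u, e u v0 /\ col u = j.+1 by apply: colP; rewrite jc.
  by have := bw u; rewrite cu.
have [h1 h2] := bs_bound bpos.
split => //.
- by have := bpos 0%N (ltn0Sn _).
- apply: (lt_le_trans h2); rewrite lerD2l; exact: harm_bound.
Qed.

End Final.

Theorem theorem1 (R : realType) :
  exists f : R -> R,
    f x @[x --> +oo] --> 0 /\
    forall (T : finType) (e : rel T), simple_graph e ->
      (grundy e)%:R <= (mu1 R e + f (mu1 R e)) ^+ 2 / 2 + 1.
Proof.
exists (fun z : R => 2 / Num.sqrt z); split; first exact: f_cvg.
move=> T e [esymm eirr].
set mu := mu1 R e.
have [g0|gp] := posnP (grundy e).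
  rewrite g0 (_ : 0%:R = 0) //.
  have : 0 <= (mu + 2 / Num.sqrt mu) ^+ 2 / 2 by rewrite divr_ge0 // sqr_ge0.
  lra.
set m := (grundy e).-1.
have hA := stepA esymm eirr (x := _) ^~ gp.
have mu0 : 0 <= mu.
  rewrite leNgt; apply/negP => mneg.
  have : mu < mu / 2 by lra.
  by move/hA => [h _ _]; lra.
have h1 : m%:R <= mu ^+ 2 by apply: lim_sq mu0 _ => x /hA [].
have h2 : 2 * m%:R - 4 * Num.sqrt (Num.sqrt (m%:R : R)) <= mu ^+ 2.
  by apply: lim_sq mu0 _ => x /hA [_ _ h]; lra.
have sq : Num.sqrt (Num.sqrt (m%:R : R)) <= Num.sqrt mu.
  rewrite -(ler_pXn2r (n := 4)) ?nnegrE ?sqrtr_ge0 // !sqrt4 //.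
  by rewrite (_ : 4%N = (2 * 2)%N) // exprM sqr_sqrtr.
have kE : (grundy e)%:R = m%:R + 1 :> R by rewrite /m natr1 prednK.
rewrite kE lerD2r ler_pdivlMr // .
have [mu00|mup] := eqVneq mu 0.
  have m0 : m%:R <= (0 : R) by move: h1; rewrite mu00 expr2 mulr0.
  have : 0 <= (mu + 2 / Num.sqrt mu) ^+ 2 by apply: sqr_ge0.
  lra.
have mp : 0 < mu by rewrite lt_def mup mu0.
set t := Num.sqrt mu.
have t0 : 0 < t by rewrite sqrtr_gt0.
have tt : t ^+ 2 = mu by rewrite sqr_sqrtr.
set u := 2 / t.
have tu : t * u = 2 by rewrite /u mulrCA mulfV ?gt_eqF ?mulr1.
have E : (mu + u) ^+ 2 = mu ^+ 2 + 4 * t + u ^+ 2.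
  rewrite -tt; rewrite (_ : (t ^+ 2 + u) ^+ 2 = t ^+ 4 + 2 * t * (t * u) + u ^+ 2); last by ring.
  rewrite tu; ring.
rewrite E.
have sq' : Num.sqrt (Num.sqrt (m%:R : R)) <= t := sq.
have : 0 <= u ^+ 2 by apply: sqr_ge0.
move: h2 sq'; set s := Num.sqrt (Num.sqrt (m%:R : R)).
lra.
Qed.
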